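(* For every hypergraph $\mathcal{H}=(Q,\mathcal{S})$ with all hyperedges nonempty and $S_n=Q$, the graph $G'_{\mathcal{H}}$ is $(P_2+P_4)$-free.
   Context: A hypergraph $\mathcal{H}=(Q,\mathcal{S})$ has element set $Q=\{q_1,\dots,q_m\}$ and hyperedges $\mathcal{S}=\{S_1,\dots,S_n\}$, $S_j\subseteq Q$. The graph $G_{\mathcal{H}}$ has vertex set $Q\cup\mathcal{S}\cup\mathcal{S}'\cup\{t_1,t_2\}$, where $\mathcal{S}'=\{S_1',\dots,S_n'\}$ is a set of $n$ new vertices, and edges: $q_iS_j$ and $q_iS_j'$ whenever $q_i\in S_j$; $S_jS_\ell'$ for all $j,\ell$; $q_hq_i$ for all distinct $h,i$; $t_1S_j$ and $t_2S_j'$ for all $j$; no other edges. $G'_{\mathcal{H}}$ is obtained from $G_{\mathcal{H}}$ by adding the edge $t_1t_2$. $P_2+P_4$ is the disjoint union of a path on 2 and a path on 4 vertices; $H$-free means no induced subgraph isomorphic to $H$. *)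

(* Defs.v *)
From HB Require Import structures.
From mathcomp Require Import all_boot.
Set Implicit Arguments. Unset Strict Implicit. Unset Printing Implicit Defensive.

(* Hypergraph H = (Q, S): Q = 'I_m (q_i <-> i), hyperedges S_1..S_{n} are
   given by a family S : 'I_n -> {set 'I_m} (here n = k.+1, so that
   the last hyperedge S_n is S ord_max). *)

Inductive gvert (m n : nat) :=
| VQ of 'I_m
| VS of 'I_n
| VSp of 'I_n
| VT1
| VT2.

Definition gvert_enc m n (v : gvert m n) : ('I_m + 'I_n + 'I_n) + bool :=
  match v with
  | VQ i => inl (inl (inl i))
  | VS j => inl (inl (inr j))
  | VSp j => inl (inr j)
  | VT1 => inr true
  | VT2 => inr false
  end.
Definition gvert_dec m n (x : ('I_m + 'I_n + 'I_n) + bool) : gvert m n :=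
  match x with
  | inl (inl (inl i)) => @VQ m n i
  | inl (inl (inr j)) => @VS m n j
  | inl (inr j) => @VSp m n j
  | inr true => @VT1 m n
  | inr false => @VT2 m n
  end.
Lemma gvert_encK m n : cancel (@gvert_enc m n) (@gvert_dec m n).
Proof. by case. Qed.
HB.instance Definition _ m n := Finite.copy (gvert m n) (can_type (@gvert_encK m n)).

(* Directed "generating" edges of G'_H; adjacency is their symmetric closure. *)
Definition gedge m n (S : 'I_n -> {set 'I_m}) (x y : gvert m n) : bool :=
  match x, y with
  | VQ h, VQ i => h != i
  | VQ i, VS j => i \in S j
  | VQ i, VSp j => i \in S j
  | VS _, VSp _ => true
  | VT1, VS _ => true
  | VT2, VSp _ => true
  | VT1, VT2 => true                     (* extra edge t1 t2 of G'_H *)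
  | _, _ => false
  end.

Definition Gp_adj m n (S : 'I_n -> {set 'I_m}) : rel (gvert m n) :=
  fun x y => gedge S x y || gedge S y x.

Definition P2P4_adj : rel 'I_6 :=
  fun i j =>
    let a := nat_of_ord i in let b := nat_of_ord j in
    [|| (a == 0) && (b == 1), (a == 1) && (b == 0),
        (a == 2) && (b == 3), (a == 3) && (b == 2),
        (a == 3) && (b == 4), (a == 4) && (b == 3),
        (a == 4) && (b == 5) | (a == 5) && (b == 4)].

Definition has_induced_P2P4 (T : finType) (adj : rel T) : Prop :=
  exists f : 'I_6 -> T, injective f /\
    forall i j : 'I_6, adj (f i) (f j) = P2P4_adj i j.

Definition P2P4_free (T : finType) (adj : rel T) : Prop :=
  ~ has_induced_P2P4 adj.

(* Main.v *)
Require Import Defs.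
From mathcomp Require Import all_boot.
Set Implicit Arguments. Unset Strict Implicit. Unset Printing Implicit Defensive.

Definition pn (a b : nat) : bool :=
    [|| (a == 0) && (b == 1), (a == 1) && (b == 0),
        (a == 2) && (b == 3), (a == 3) && (b == 2),
        (a == 3) && (b == 4), (a == 4) && (b == 3),
        (a == 4) && (b == 5) | (a == 5) && (b == 4)].

Definition okn (c : nat -> nat) : bool :=
  all (fun i => all (fun j => (i != j) ==>
     (((c i == 0) && (c j == 0)) ==> pn i j) &&
     (((c i != 0) && (c j != 0)) ==> (pn i j == (c i != c j)))) (iota 0 6)) (iota 0 6).

Definition mk (s : seq nat) (i : nat) := nth 0 s i.

Lemma brute : all (fun a => all (fun b => all (fun c => all (fun d =>
  all (fun e => all (fun g => ~~ okn (mk [:: a; b; c; d; e; g]))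
  (iota 0 3)) (iota 0 3)) (iota 0 3)) (iota 0 3)) (iota 0 3)) (iota 0 3).
Proof. vm_compute. reflexivity. Qed.

Lemma okn_ext c c' : (forall i, i < 6 -> c i = c' i) -> okn c = okn c'.
Proof.
move=> H; rewrite /okn; apply: eq_in_all => i; rewrite mem_iota => /andP[_ Hi].
apply: eq_in_all => j; rewrite mem_iota => /andP[_ Hj].
by rewrite !H.
Qed.

Definition cls m n (v : gvert m n) : nat :=
  match v with
  | VQ _ => 0
  | VS _ | VT2 => 1
  | VSp _ | VT1 => 2
  end.

Lemma cls_lt m n (v : gvert m n) : cls v \in iota 0 3.
Proof. by case: v. Qed.

Lemma cls_adj m k (S : 'I_k.+1 -> {set 'I_m}) (x y : gvert m k.+1) :
  x != y ->
  (((cls x == 0) && (cls y == 0)) ==> Gp_adj S x y) &&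
  (((cls x != 0) && (cls y != 0)) ==> (Gp_adj S x y == (cls x != cls y))).
Proof.
case: x => [a|a|a||]; case: y => [b|b|b||] //= Hne;
  rewrite /Gp_adj /= ?orbF ?orbT //.
by rewrite andbT; apply/orP; left; apply: contraNneq Hne => ->.
Qed.

Theorem lemma34 (m k : nat) (S : 'I_k.+1 -> {set 'I_m}) :
  (forall j, S j != set0) ->
  S ord_max = setT ->
  P2P4_free (Gp_adj S).
Proof.
move=> _ _ [f [inj_f Hf]].
pose c i := cls (f (inord i : 'I_6)).
have ok : okn c.
  apply/allP => i; rewrite mem_iota => /andP[_ Hi].
  apply/allP => j; rewrite mem_iota => /andP[_ Hj].
  apply/implyP => ij.
  have -> : pn i j = P2P4_adj (inord i) (inord j).
    by rewrite /P2P4_adj /= (inordK (Hi : i < 6)) (inordK (Hj : j < 6)).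
  rewrite /c -(Hf (inord i) (inord j)); apply: cls_adj.
  apply: contra ij => /eqP /inj_f /(congr1 (@nat_of_ord 6)).
  by rewrite (inordK (Hi : i < 6)) (inordK (Hj : j < 6)) => ->.
have := brute.
move=> /allP /(_ _ (cls_lt (f (inord 0)))) /allP /(_ _ (cls_lt (f (inord 1))))
  /allP /(_ _ (cls_lt (f (inord 2)))) /allP /(_ _ (cls_lt (f (inord 3))))
  /allP /(_ _ (cls_lt (f (inord 4)))) /allP /(_ _ (cls_lt (f (inord 5)))).
rewrite -(okn_ext (c := c)) ?ok //.
by move=> i; rewrite /c /mk; do 6 (case: i => [|i] //=).
Qed.
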